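(* Let $\phi:[0,\infty)\to\mathbb{R}$ be a strictly monotonic, not identically zero function of class $C^2([0,\infty))$ such that $\phi(r)=O(r^{-1/2-\alpha})$ as $r\to\infty$ for some $\alpha>0$. Define, for $r>0$, \[ \Phi(r)=-\int_r^{\infty}\phi'(s)^2\, s\,ds,\qquad \xi(r)=r+\int_r^{\infty}\bigl(1-\mathrm{e}^{\Phi(s)}\bigr)\,ds, \] \[ A(r)=2r^2\int_r^{\infty}\frac{\xi(s)-3m}{s^4}\,\mathrm{e}^{\Phi(s)}\,ds,\qquad f(r)=\mathrm{e}^{-2\Phi(r)}A(r), \] where $m$ is a real parameter satisfying $3m>\xi(0)$ (here $\xi(0)=\lim_{r\to0^+}\xi(r)$). Suppose $r_h>0$ is such that $f(r_h)=0$ and $f(r)>0$ for all $r>r_h$ (the event horizon). Then $A$ is strictly increasing on $(r_h,\infty)$.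
   Context: These quadratures give the general static, spherically symmetric, asymptotically flat solution of the Einstein–Klein–Gordon equations for a minimally coupled scalar field $\phi$ with metric $ds^2=A\,dt^2-dr^2/f-r^2(d\theta^2+\sin^2\theta\,d\varphi^2)$, $m$ being the Schwarzschild mass; the case $3m>\xi(0)$ is the scalar field black hole case. A prime denotes $d/dr$. *)

(* Defs.v *)
From Stdlib Require Import Reals.
From Coquelicot Require Import Coquelicot.
Open Scope R_scope.

Definition improper_int (g : R -> R) (r : R) : R :=
  real (Lim (fun b => RInt g r b) p_infty).

Definition improper_int_conv (g : R -> R) (r : R) : Prop :=
  ex_finite_lim (fun b => RInt g r b) p_infty.

(* f is of class C^2 on [0,+oo): f, f', f'' exist on (0,+oo) and
   f, f', f'' are continuous on [0,+oo) (right-continuous at 0), i.e. the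
   derivatives extend continuously to the endpoint 0. *)
Definition C2_on_nonneg (f : R -> R) : Prop :=
  exists f1 f2 : R -> R,
    (forall x, 0 < x -> is_derive f x (f1 x)) /\
    (forall x, 0 < x -> is_derive f1 x (f2 x)) /\
    (forall x, 0 < x -> continuous f2 x) /\
    filterlim f (at_right 0) (locally (f 0)) /\
    filterlim f1 (at_right 0) (locally (f1 0)) /\
    filterlim f2 (at_right 0) (locally (f2 0)).

Definition strictly_monotonic_nonneg (f : R -> R) : Prop :=
  (forall x y, 0 <= x -> x < y -> f x < f y) \/
  (forall x y, 0 <= x -> x < y -> f y < f x).

Definition bigO_decay (f : R -> R) (alpha : R) : Prop :=
  exists C R0 : R, 0 < R0 /\
    forall r, R0 <= r -> Rabs (f r) <= C * Rpower r (- (1/2) - alpha).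

Definition PhiF (phi : R -> R) (r : R) : R :=
  - improper_int (fun s => (Derive phi s) ^ 2 * s) r.

Definition xiF (phi : R -> R) (r : R) : R :=
  r + improper_int (fun s => 1 - exp (PhiF phi s)) r.


Definition AF (phi : R -> R) (m : R) (r : R) : R :=
  2 * r ^ 2 *
  improper_int (fun s => (xiF phi s - 3 * m) / s ^ 4 * exp (PhiF phi s)) r.

Definition fF (phi : R -> R) (m : R) (r : R) : R :=
  exp (-2 * PhiF phi r) * AF phi m r.

(* Main.v *)
Require Import Defs.
From Stdlib Require Import Reals Lra Classical.
From Coquelicot Require Import Coquelicot.
Open Scope R_scope.

Definition pos_cont (g : R -> R) := forall t, 0 < t -> continuous g t.

Lemma exp_le_mono a b : a <= b -> exp a <= exp b.
Proof. intros [H|H]; [left; apply exp_increasing; auto | subst; lra]. Qed.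

Lemma conv_lim g r : improper_int_conv g r ->
  is_lim (fun b => RInt g r b) p_infty (improper_int g r).
Proof. intros [l Hl]. unfold improper_int. rewrite (is_lim_unique _ _ _ Hl). exact Hl. Qed.

Lemma exR g a b : pos_cont g -> 0 < a -> 0 < b -> ex_RInt g a b.
Proof.
  intros Hg Ha Hb. apply (ex_RInt_continuous (V:=R_CompleteNormedModule)). intros z [Hz _]. apply Hg.
  eapply Rlt_le_trans; [|exact Hz]. apply Rmin_glb_lt; auto.
Qed.

Lemma locally_pos x : 0 < x -> locally x (fun t => 0 < t).
Proof.
  intros Hx. exists (mkposreal x Hx). intros t Ht.
  unfold ball in Ht; simpl in Ht; unfold AbsRing_ball, abs, minus, plus, opp in Ht; simpl in Ht.
  apply Rabs_lt_between in Ht. lra.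
Qed.

Lemma chasles g r a b : pos_cont g -> 0 < r -> 0 < a -> 0 < b ->
  RInt g r b = RInt g r a + RInt g a b.
Proof.
  intros Hg Hr Ha Hb. symmetry. apply (RInt_Chasles g r a b); apply exR; auto.
Qed.

Lemma shift_lim g r a : pos_cont g -> 0 < r -> 0 < a -> improper_int_conv g r ->
  is_lim (fun b => RInt g a b) p_infty (improper_int g r - RInt g r a).
Proof.
  intros Hg Hr Ha Hc.
  apply is_lim_ext_loc with (fun b => RInt g r b - RInt g r a).
  - exists 0. intros b Hb. rewrite (chasles g r a b); auto. ring.
  - eapply is_lim_minus. apply conv_lim; auto. apply is_lim_const. simpl. reflexivity.
Qed.

Lemma shift_eq g r a : pos_cont g -> 0 < r -> 0 < a -> improper_int_conv g r ->
  improper_int g a = improper_int g r - RInt g r a.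
Proof.
  intros Hg Hr Ha Hc. unfold improper_int at 1.
  rewrite (is_lim_unique _ _ _ (shift_lim g r a Hg Hr Ha Hc)). reflexivity.
Qed.

Lemma shift_conv g r a : pos_cont g -> 0 < r -> 0 < a -> improper_int_conv g r ->
  improper_int_conv g a.
Proof.
  intros Hg Hr Ha Hc. eexists. apply (shift_lim g r a Hg Hr Ha Hc).
Qed.

Lemma impr_deriv g r x : pos_cont g -> 0 < r -> 0 < x -> improper_int_conv g r ->
  is_derive (improper_int g) x (- g x).
Proof.
  intros Hg Hr Hx Hc.
  apply is_derive_ext_loc with (fun t => improper_int g r - RInt g r t).
  - generalize (locally_pos x Hx). apply filter_imp. intros t Ht.
    symmetry. apply shift_eq; auto.
  - replace (- g x) with (0 - g x) by ring.
    apply (is_derive_minus (fun _ => improper_int g r) (fun t => RInt g r t)).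
    apply (is_derive_const (K:=R_AbsRing) (V:=R_NormedModule)).
    apply is_derive_RInt with (a := r).
    + generalize (locally_pos x Hx). apply filter_imp. intros t Ht.
      apply (RInt_correct (V:=R_CompleteNormedModule)). apply exR; auto.
    + apply Hg; auto.
Qed.

Lemma impr_ge0 g r : pos_cont g -> 0 < r -> improper_int_conv g r ->
  (forall s, r < s -> 0 <= g s) -> 0 <= improper_int g r.
Proof.
  intros Hg Hr Hc Hpos.
  assert (H := is_lim_le_loc (fun _ => 0) (fun b => RInt g r b) p_infty 0 (improper_int g r)).
  simpl in H. apply H.
  - exists r. intros b Hb. simpl in Hb. apply RInt_ge_0. lra. apply exR; auto; lra.
    intros y Hy. apply Hpos. lra.
  - apply is_lim_const.
  - apply conv_lim; auto.
Qed.

Lemma mono_lim (F : R -> R) S M :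
  (forall a b, S <= a -> a <= b -> F a <= F b) -> (forall b, S <= b -> F b <= M) ->
  ex_finite_lim F p_infty.
Proof.
  intros Hm Hb.
  set (E := fun y => exists b, S <= b /\ y = F b).
  assert (HE1 : bound E). { exists M. intros y [b [Hs ->]]. apply Hb; auto. }
  assert (HE2 : exists y, E y). { exists (F S). exists S. split; [lra|auto]. }
  destruct (completeness E HE1 HE2) as [l [Hub Hlub]].
  exists l. apply is_lim_spec. intros eps.
  assert (Hex : exists b0, S <= b0 /\ l - eps < F b0).
  { apply NNPP. intros Hn.
    assert (l <= l - eps).
    { apply Hlub. intros y [b [Hs ->]]. apply Rnot_lt_le. intros Hlt. apply Hn. exists b. auto. }
    destruct eps; simpl in *; lra. }
  destruct Hex as [b0 [Hs0 Hl0]].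
  exists b0. intros y Hy.
  assert (F b0 <= F y) by (apply Hm; lra).
  assert (F y <= l) by (apply Hub; exists y; split; [lra|auto]).
  apply Rabs_lt_between. destruct eps; simpl in *; lra.
Qed.

Lemma exd_cont (f : R -> R) x : ex_derive f x -> continuous f x.
Proof. intros H. apply (ex_derive_continuous (K:=R_AbsRing) (V:=R_NormedModule)). exact H. Qed.
Section Main.
Variable phi : R -> R.
Variables f1 f2 : R -> R.
Hypothesis Hd1 : forall x, 0 < x -> is_derive phi x (f1 x).
Hypothesis Hd2 : forall x, 0 < x -> is_derive f1 x (f2 x).
Hypothesis Hk : forall r, 0 < r -> improper_int_conv (fun s => (Derive phi s) ^ 2 * s) r.
Hypothesis Hh : forall r, 0 < r -> improper_int_conv (fun s => 1 - exp (PhiF phi s)) r.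

Let k := fun s => (Derive phi s) ^ 2 * s.
Let h1 := fun s => 1 - exp (PhiF phi s).

Lemma k_cont : pos_cont k.
Proof.
  intros t Ht. apply continuous_ext_loc with (fun s => f1 s ^ 2 * s).
  - generalize (locally_pos t Ht). apply filter_imp. intros s Hs. unfold k.
    rewrite (is_derive_unique _ _ _ (Hd1 s Hs)). reflexivity.
  - apply exd_cont. auto_derive. exists (f2 t). apply Hd2; auto.
Qed.

Lemma k_ge0 s : 0 < s -> 0 <= k s.
Proof. intros Hs. unfold k. apply Rmult_le_pos; [apply pow2_ge_0|lra]. Qed.

Lemma Phi_deriv x : 0 < x -> is_derive (PhiF phi) x (k x).
Proof.
  intros Hx. unfold PhiF. replace (k x) with (- - k x) by ring.
  apply (is_derive_opp (fun r => improper_int k r)).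
  apply (impr_deriv k x x k_cont Hx Hx (Hk x Hx)).
Qed.

Lemma Phi_cont : pos_cont (PhiF phi).
Proof. intros t Ht. apply exd_cont. eexists. apply Phi_deriv; auto. Qed.

Lemma Phi_le0 r : 0 < r -> PhiF phi r <= 0.
Proof.
  intros Hr. unfold PhiF. change (- improper_int k r <= 0). cut (0 <= improper_int k r). lra.
  apply impr_ge0; [apply k_cont|exact Hr|apply Hk; exact Hr|].
  intros s Hs. apply k_ge0. lra.
Qed.

Lemma Phi_mono r s : 0 < r -> r <= s -> PhiF phi r <= PhiF phi s.
Proof.
  intros Hr Hrs. unfold PhiF. change (- improper_int k r <= - improper_int k s).
  rewrite (shift_eq k r s k_cont Hr ltac:(lra) (Hk r Hr)).
  cut (0 <= RInt k r s). lra.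
  apply RInt_ge_0; auto. apply exR; auto. apply k_cont. lra.
  intros z Hz. apply k_ge0. lra.
Qed.

Lemma h1_cont : pos_cont h1.
Proof.
  intros t Ht. apply exd_cont. unfold h1. auto_derive.
  eexists. apply Phi_deriv; auto.
Qed.

Lemma h1_ge0 s : 0 < s -> 0 <= h1 s.
Proof.
  intros Hs. unfold h1. assert (exp (PhiF phi s) <= exp 0) by (apply exp_le_mono, Phi_le0; auto).
  rewrite exp_0 in H. lra.
Qed.

Let c := improper_int h1.

Lemma c_ge0 r : 0 < r -> 0 <= c r.
Proof.
  intros Hr. apply impr_ge0; [apply h1_cont|exact Hr|apply Hh; exact Hr|].
  intros s Hs. apply h1_ge0. lra.
Qed.

Lemma c_shift r s : 0 < r -> 0 < s -> c s = c r - RInt h1 r s.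
Proof. intros Hr Hs. apply shift_eq; [apply h1_cont|exact Hr|exact Hs|apply Hh; exact Hr]. Qed.

Lemma c_mono r s : 0 < r -> r <= s -> c s <= c r.
Proof.
  intros Hr Hrs. rewrite (c_shift r s Hr ltac:(lra)).
  cut (0 <= RInt h1 r s). lra.
  apply RInt_ge_0; auto. apply exR; auto. apply h1_cont. lra.
  intros z Hz. apply h1_ge0. lra.
Qed.

Lemma xi_eq r : xiF phi r = r + c r.
Proof. reflexivity. Qed.

Lemma xi_deriv x : 0 < x -> is_derive (xiF phi) x (1 + - h1 x).
Proof.
  intros Hx. unfold xiF.
  apply (is_derive_plus (fun r => r) (fun r => improper_int h1 r)).
  apply (is_derive_id (K:=R_AbsRing)).
  apply (impr_deriv h1 x x h1_cont Hx Hx (Hh x Hx)).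
Qed.

Lemma xi_cont : pos_cont (xiF phi).
Proof. intros t Ht. apply exd_cont. eexists. apply xi_deriv; auto. Qed.

Lemma RInt_h1_le r s : 0 < r -> r <= s ->
  RInt h1 r s <= (s - r) * (1 - exp (PhiF phi r)).
Proof.
  intros Hr Hrs.
  replace ((s - r) * (1 - exp (PhiF phi r))) with (RInt (fun _ => 1 - exp (PhiF phi r)) r s).
  2:{ rewrite RInt_const. reflexivity. }
  apply RInt_le; auto. apply exR; auto. apply h1_cont. lra.
  apply ex_RInt_const.
  intros z Hz. unfold h1. apply Rplus_le_compat_l, Ropp_le_contravar, exp_le_mono, Phi_mono; lra.
Qed.

Lemma RInt_h1_ge r s : 0 < r -> r <= s ->
  (s - r) * (1 - exp (PhiF phi s)) <= RInt h1 r s.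
Proof.
  intros Hr Hrs.
  replace ((s - r) * (1 - exp (PhiF phi s))) with (RInt (fun _ => 1 - exp (PhiF phi s)) r s).
  2:{ rewrite RInt_const. reflexivity. }
  apply RInt_le; auto. apply ex_RInt_const. apply exR; auto. apply h1_cont. lra.
  intros z Hz. unfold h1. apply Rplus_le_compat_l, Ropp_le_contravar, exp_le_mono, Phi_mono; lra.
Qed.

Lemma F1 r s : 0 < r -> r <= s -> exp (PhiF phi r) * (s - r) <= xiF phi s - xiF phi r.
Proof.
  intros Hr Hrs. rewrite !xi_eq. rewrite (c_shift r s Hr ltac:(lra)).
  generalize (RInt_h1_le r s Hr Hrs). nra.
Qed.

Lemma F2 xi0 r : filterlim (xiF phi) (at_right 0) (locally xi0) -> 0 < r ->
  c r + (1 - exp (PhiF phi r)) * r <= xi0.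
Proof.
  intros Hxi Hr.
  apply (closed_filterlim_loc (xiF phi) (fun u => c r + (1 - exp (PhiF phi r)) * r <= u) xi0 Hxi);
    [|apply closed_ge].
  exists (mkposreal r Hr). intros e He Hepos.
  unfold ball in He; simpl in He; unfold AbsRing_ball, abs, minus, plus, opp in He; simpl in He.
  apply Rabs_lt_between in He.
  rewrite xi_eq. rewrite (c_shift e r Hepos Hr).
  generalize (RInt_h1_ge e r Hepos ltac:(lra)).
  generalize (exp_pos (PhiF phi r)). nra.
Qed.

Variable m : R.
Let g := fun s => (xiF phi s - 3 * m) / s ^ 4 * exp (PhiF phi s).

Lemma g_cont : pos_cont g.
Proof.
  intros t Ht. apply exd_cont. unfold g. auto_derive. repeat split.
  all: try (eexists; apply xi_deriv; auto).
  all: try (eexists; apply Phi_deriv; auto).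
  all: try (assert (0 < t*(t*(t*(t*1)))) by (repeat apply Rmult_lt_0_compat; lra); lra).
Qed.

Lemma pos_bound C s a e : 0 <= C -> 1 <= s -> 0 <= a -> a <= s + C -> 0 < e -> e <= 1 ->
  a / s ^ 4 * e <= (1 + C) / s ^ 2.
Proof.
  intros HC Hs Ha Ha2 He He1.
  assert (Hs0 : 0 < s) by lra.
  set (t := / s).
  assert (Ht : 0 < t) by (apply Rinv_0_lt_compat; lra).
  assert (Hst : s * t = 1) by (unfold t; field; lra).
  replace (a / s ^ 4 * e) with (a * e * t^4) by (unfold t; field; lra).
  replace ((1 + C) / s ^ 2) with ((1 + C) * t^2) by (unfold t; field; lra).
  assert (Ht1 : t <= 1) by nra.
  assert (a * e <= s + C) by nra.
  assert (Hst2 : s * t^2 = t) by (replace (s*t^2) with ((s*t)*t) by ring; rewrite Hst; ring).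
  assert (Ht2 : t^2 <= 1) by nra.
  assert (H2 : (s + C) * t^2 <= 1 + C) by nra.
  assert (0 <= t^2) by nra.
  replace (a * e * t^4) with ((a * e) * t^2 * t^2) by ring.
  apply Rle_trans with ((s + C) * t^2 * t^2).
  apply Rmult_le_compat_r; auto. apply Rmult_le_compat_r; auto.
  apply Rmult_le_compat_r; auto.
Qed.

Lemma g_conv r : 0 < r -> improper_int_conv g r.
Proof.
  intros Hr.
  set (S := Rmax 1 (3 * m)).
  assert (HS1 : 1 <= S) by apply Rmax_l.
  assert (HS2 : 3 * m <= S) by apply Rmax_r.
  assert (HS0 : 0 < S) by lra.
  set (C := c S + Rabs (3 * m)).
  assert (HC : 0 <= C) by (generalize (c_ge0 S HS0) (Rabs_pos (3*m)); unfold C; lra).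
  assert (gpos : forall s, S <= s -> 0 <= g s).
  { intros s Hs. unfold g. rewrite xi_eq. generalize (c_ge0 s ltac:(lra)). intros.
    apply Rmult_le_pos; [|left; apply exp_pos].
    apply Rmult_le_pos; [lra|]. left; apply Rinv_0_lt_compat, pow_lt; lra. }
  assert (gbd : forall s, S <= s -> g s <= (1 + C) / s ^ 2).
  { intros s Hs. unfold g. rewrite xi_eq.
    generalize (c_ge0 s ltac:(lra)) (c_mono S s HS0 Hs) (Rle_abs (- (3*m))). rewrite Rabs_Ropp. intros.
    apply pos_bound; [exact HC|lra|lra|unfold C; lra|apply exp_pos|].
    rewrite <- exp_0. apply exp_le_mono, Phi_le0. lra. }
  apply (shift_conv g S r g_cont HS0 Hr).
  apply (mono_lim (fun b => RInt g S b) S ((1 + C) / S)).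
  - intros a b Ha Hab. rewrite (chasles g S a b g_cont); try lra.
    cut (0 <= RInt g a b). lra.
    apply RInt_ge_0; auto. apply exR; try lra. apply g_cont.
    intros z Hz. apply gpos. lra.
  - intros b Hb.
    assert (HI : is_RInt (fun s => (1 + C) / s ^ 2) S b (minus ((fun s => - (1 + C) / s) b) ((fun s => - (1 + C) / s) S))).
    { apply (is_RInt_derive (V:=R_CompleteNormedModule)).
      - intros z Hz. rewrite Rmin_left in Hz by lra. rewrite Rmax_right in Hz by lra.
        auto_derive. lra. field. lra.
      - intros z Hz. rewrite Rmin_left in Hz by lra. rewrite Rmax_right in Hz by lra.
        apply exd_cont. auto_derive. assert (0 < z * (z * 1)) by (repeat apply Rmult_lt_0_compat; lra). lra. }
    apply Rle_trans with (RInt (fun s => (1 + C) / s ^ 2) S b).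
    + apply RInt_le; auto. apply exR; try lra. apply g_cont. eexists; exact HI.
      intros z Hz. apply gbd. lra.
    + rewrite (is_RInt_unique _ _ _ _ HI). unfold minus, plus, opp; simpl.
      assert (0 <= (1 + C) / b). { apply Rmult_le_pos; [lra|]. left; apply Rinv_0_lt_compat; lra. }
      unfold Rdiv in *. lra.
Qed.

Lemma A_deriv x : 0 < x ->
  is_derive (AF phi m) x (4 * x * improper_int g x - 2 * x ^ 2 * g x).
Proof.
  intros Hx.
  assert (H := is_derive_mult (fun r => 2 * r ^ 2) (improper_int g) x (4 * x) (- g x)).
  unfold AF. fold g.
  replace (4 * x * improper_int g x - 2 * x ^ 2 * g x) with
    (plus (mult (4 * x) (improper_int g x)) (mult (2 * x ^ 2) (- g x))).
  2:{ unfold plus, mult; simpl. ring. }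
  apply H.
  - auto_derive; auto. ring.
  - apply (impr_deriv g x x g_cont Hx Hx (g_conv x Hx)).
  - intros; apply Rmult_comm.
Qed.

Lemma Jlow x : 0 < x -> 0 < xiF phi x - 3 * m ->
  exp (PhiF phi x) * ((xiF phi x - 3 * m) / (3 * x ^ 3) + exp (PhiF phi x) / (6 * x ^ 2))
  <= improper_int g x.
Proof.
  intros Hx Hu.
  assert (HE : 0 < exp (PhiF phi x)) by apply exp_pos.
  set (E := exp (PhiF phi x)) in *. set (u := xiF phi x - 3 * m) in *.
  set (P := fun t => E * (- (u - E * x) / 3 * t ^ 3 - E / 2 * t ^ 2)).
  set (W := fun s => P (/ s)).
  set (w := fun s => E * (u + E * (s - x)) / s ^ 4).
  assert (HW : forall b, x < b -> W b - W x <= RInt g x b).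
  { intros b Hb.
    assert (HI : is_RInt w x b (minus (W b) (W x))).
    { apply (is_RInt_derive (V:=R_CompleteNormedModule)).
      - intros z Hz. rewrite Rmin_left in Hz by lra. rewrite Rmax_right in Hz by lra.
        unfold W, P, w. auto_derive. lra. field. lra.
      - intros z Hz. rewrite Rmin_left in Hz by lra. rewrite Rmax_right in Hz by lra.
        apply exd_cont. unfold w. auto_derive.
        assert (0 < z * (z * (z * (z * 1)))) by (repeat apply Rmult_lt_0_compat; lra). lra. }
    change (minus (W b) (W x)) with (W b - W x) in HI.
    rewrite <- (is_RInt_unique _ _ _ _ HI).
    apply RInt_le. lra. eexists; exact HI. apply exR; try lra. apply g_cont.
    intros z Hz.
    assert (H1 := F1 x z Hx ltac:(lra)). fold E in H1.
    assert (H2 : E <= exp (PhiF phi z)) by (apply exp_le_mono, Phi_mono; lra).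
    assert (Hz4 : 0 < z ^ 4) by (apply pow_lt; lra).
    unfold g, w.
    replace (E * (u + E * (z - x)) / z ^ 4) with ((u + E * (z - x)) / z ^ 4 * E) by (field; lra).
    apply Rmult_le_compat.
    + unfold Rdiv. apply Rmult_le_pos. nra. left; apply Rinv_0_lt_compat; auto.
    + lra.
    + unfold Rdiv. apply Rmult_le_compat_r. left; apply Rinv_0_lt_compat; auto.
      unfold u. lra.
    + exact H2. }
  assert (Hinv : is_lim (fun b => / b) p_infty 0).
  { apply (is_lim_inv (fun y => y) p_infty p_infty (is_lim_id p_infty)). discriminate. }
  assert (HP : is_lim W p_infty (P 0)).
  { apply (is_lim_comp_continuous (fun b => / b) P p_infty 0 Hinv).
    apply exd_cont. unfold P. auto_derive. auto. }
  assert (HP0 : P 0 = 0) by (unfold P; ring).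
  rewrite HP0 in HP.
  assert (Hl : is_lim (fun b => W b - W x) p_infty (0 - W x)).
  { eapply is_lim_minus. exact HP. apply is_lim_const. simpl. reflexivity. }
  assert (H := is_lim_le_loc (fun b => W b - W x) (fun b => RInt g x b) p_infty (0 - W x)
                 (improper_int g x)).
  simpl in H.
  replace (E * (u / (3 * x ^ 3) + E / (6 * x ^ 2))) with (0 - W x).
  2:{ unfold W, P. field. lra. }
  apply H.
  - exists x. intros b Hb. apply HW. exact Hb.
  - exact Hl.
  - apply conv_lim. apply g_conv. exact Hx.
Qed.

Lemma dA_pos xi0 z : filterlim (xiF phi) (at_right 0) (locally xi0) -> 3 * m > xi0 ->
  0 < z -> 0 < AF phi m z -> 0 < 4 * z * improper_int g z - 2 * z ^ 2 * g z.
Proof.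
  intros Hxi Hm Hz HA.
  unfold AF in HA. fold g in HA.
  assert (Hz2 : 0 < z ^ 2) by (apply pow_lt; lra).
  assert (HJ : 0 < improper_int g z).
  { apply (Rmult_lt_reg_l (2 * z ^ 2)). lra. rewrite Rmult_0_r. exact HA. }
  assert (HE : 0 < exp (PhiF phi z)) by apply exp_pos.
  assert (Hz4 : 0 < z ^ 4) by (apply pow_lt; lra).
  destruct (Rle_or_lt (xiF phi z - 3 * m) 0) as [Hu|Hu].
  - assert (g z <= 0).
    { unfold g, Rdiv. rewrite Rmult_assoc. 
      apply Rmult_le_0_r; [lra|]. apply Rmult_le_pos; [left; apply Rinv_0_lt_compat; auto| lra]. }
    nra.
  - assert (HL := Jlow z Hz Hu).
    assert (H2 := F2 xi0 z Hxi Hz). rewrite xi_eq in Hu, HL.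
    set (E := exp (PhiF phi z)) in *. set (cz := c z) in *.
    assert (Hlt : z + cz - 3 * m < E * z) by nra.
    set (u := z + cz - 3 * m) in *.
    assert (Hg : g z = u / z ^ 4 * E) by (unfold g; rewrite xi_eq; reflexivity).
    rewrite Hg.
    apply Rlt_le_trans with (4 * z * (E * (u / (3 * z ^ 3) + E / (6 * z ^ 2))) - 2 * z ^ 2 * (u / z ^ 4 * E)).
    + replace (4 * z * (E * (u / (3 * z ^ 3) + E / (6 * z ^ 2))) - 2 * z ^ 2 * (u / z ^ 4 * E))
        with (2 * E * (E * z - u) / (3 * z ^ 2)) by (field; lra).
      unfold Rdiv. apply Rmult_lt_0_compat. apply Rmult_lt_0_compat; lra.
      apply Rinv_0_lt_compat. lra.
    + unfold Rminus. apply Rplus_le_compat_r. apply Rmult_le_compat_l. lra. exact HL.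
Qed.

End Main.

Theorem proposition1 (phi : R -> R) (alpha m xi0 rh : R) :
  C2_on_nonneg phi ->
  strictly_monotonic_nonneg phi ->
  (exists x, 0 <= x /\ phi x <> 0) ->
  0 < alpha ->
  bigO_decay phi alpha ->
  (* the improper integrals defining Phi and xi converge for r > 0 *)
  (forall r, 0 < r -> improper_int_conv (fun s => (Derive phi s) ^ 2 * s) r) ->
  (forall r, 0 < r -> improper_int_conv (fun s => 1 - exp (PhiF phi s)) r) ->
  (* xi0 = xi(0) := lim_{r -> 0+} xi(r) *)
  filterlim (xiF phi) (at_right 0) (locally xi0) ->
  3 * m > xi0 ->
  0 < rh ->
  fF phi m rh = 0 ->
  (forall r, rh < r -> 0 < fF phi m r) ->
  forall x y, rh < x -> x < y -> AF phi m x < AF phi m y.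
Proof.
  intros [f1 [f2 [Hd1 [Hd2 _]]]] _ _ _ _ Hk Hh Hxi Hm Hrh _ Hf x y Hx Hxy.
  set (dA := fun z => 4 * z *
     improper_int (fun s : R => (xiF phi s - 3 * m) / s ^ 4 * exp (PhiF phi s)) z -
     2 * z ^ 2 * (fun s : R => (xiF phi s - 3 * m) / s ^ 4 * exp (PhiF phi s)) z).
  assert (Hpos : forall z, rh < z -> 0 < dA z).
  { intros z Hz. unfold dA.
    apply (dA_pos phi f1 f2 Hd1 Hd2 Hk Hh m xi0 z Hxi Hm ltac:(lra)).
    assert (H := Hf z Hz). unfold fF in H.
    apply (Rmult_lt_reg_l (exp (-2 * PhiF phi z))). apply exp_pos.
    rewrite Rmult_0_r. exact H. }
  destruct (MVT_gen (AF phi m) x y dA) as [c0 [Hc Heq]].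
  - intros z Hz. rewrite Rmin_left in Hz by lra. rewrite Rmax_right in Hz by lra.
    apply (A_deriv phi f1 f2 Hd1 Hd2 Hk Hh m z ltac:(lra)).
  - intros z Hz. rewrite Rmin_left in Hz by lra. rewrite Rmax_right in Hz by lra.
    apply continuity_pt_filterlim. apply exd_cont.
    eexists. apply (A_deriv phi f1 f2 Hd1 Hd2 Hk Hh m z ltac:(lra)).
  - rewrite Rmin_left in Hc by lra. rewrite Rmax_right in Hc by lra.
    assert (0 < dA c0) by (apply Hpos; lra).
    assert (0 < dA c0 * (y - x)) by (apply Rmult_lt_0_compat; lra).
    lra.
Qed.
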